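(* Let $b\ge 2$. For every finite nonempty string $I$ of base-$b$ digits there exist infinitely many $b$-wARH numbers whose base-$b$ representation contains $I$ as a contiguous substring.
   Context: Fix a base $b\ge 2$. $s_b(N)$ is the sum of the base-$b$ digits of $N$. For a positive integer $X$, its reversal $X^R$ is the integer whose base-$b$ representation is that of $X$ written in reverse order (leading zeros of the result are dropped). A positive integer $N$ is a $b$-wARH number if there exists an integer $A\ge 0$ such that $N=(A+s_b(N))+(A+s_b(N))^R$. *)

(* Defs.v *)
From mathcomp Require Import all_boot.
Set Implicit Arguments. Unset Strict Implicit. Unset Printing Implicit Defensive.

(* Base-b digits of n, least significant first; digits of 0 is [::]. *)
Fixpoint digits_le_aux (fuel b n : nat) : seq nat :=
  match fuel with
  | 0 => [::]
  | fuel'.+1 => if n == 0 then [::] else (n %% b) :: digits_le_aux fuel' b (n %/ b)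
  end.
Definition digits_le (b n : nat) : seq nat := digits_le_aux n.+1 b n.

Definition digits (b n : nat) : seq nat := rev (digits_le b n).

Definition from_digits (b : nat) (s : seq nat) : nat :=
  foldl (fun acc d => acc * b + d) 0 s.

Definition sb (b n : nat) : nat := sumn (digits_le b n).

(* X^R: reverse the base-b representation (leading zeros of result drop
   automatically when evaluating). *)
Definition revb (b x : nat) : nat := from_digits b (rev (digits b x)).

Definition wARH (b N : nat) : Prop :=
  0 < N /\ exists A : nat, N = (A + sb b N) + revb b (A + sb b N).

(* Main.v *)
Require Import Defs.
From mathcomp Require Import all_boot.
From mathcomp Require Import zify.

Lemma fd_acc b a t : foldl (fun acc d => acc * b + d) a t
  = a * b ^ size t + from_digits b t.
Proof.
rewrite /from_digits; elim: t a => [|x t IH] a /=; first by rewrite expn0 muln1 addn0.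
rewrite IH (IH x) expnS; lia.
Qed.

Lemma fd_cat b s t : from_digits b (s ++ t) = from_digits b s * b ^ size t + from_digits b t.
Proof. by rewrite /from_digits foldl_cat fd_acc. Qed.

Lemma fd_nseq0 b k : from_digits b (nseq k 0) = 0.
Proof. by rewrite /from_digits; elim: k => //= k; rewrite mul0n add0n. Qed.

Lemma fd_rcons b s x : from_digits b (rcons s x) = from_digits b s * b + x.
Proof. by rewrite -cats1 fd_cat /= expn1. Qed.

Lemma aux_stable b (hb : 2 <= b) n f1 f2 : n < f1 -> n < f2 ->
  digits_le_aux f1 b n = digits_le_aux f2 b n.
Proof.
elim: f1 n f2 => [|f1 IH] n [|f2] //= h1 h2.
case: eqP => // /eqP hn; congr (_ :: _); apply: IH.
- have : n %/ b < n by apply: ltn_Pdiv => //; lia.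
  lia.
- have : n %/ b < n by apply: ltn_Pdiv => //; lia.
  lia.
Qed.

Lemma digits_le_step b (hb : 2 <= b) v d : d < b -> 0 < v * b + d ->
  digits_le b (v * b + d) = d :: digits_le b v.
Proof.
move=> hd hp; rewrite /digits_le /=.
have -> : (v * b + d == 0) = false by lia.
have e1 : (v * b + d) %% b = d by rewrite modnMDl modn_small.
have e2 : (v * b + d) %/ b = v by rewrite divnMDl ?divn_small ?addn0 //; lia.
rewrite e1 e2; congr (_ :: _); transitivity (digits_le_aux v.+1 b v); last by [].
apply: (@aux_stable b hb); nia.
Qed.

Lemma fd_pos b d0 s : 0 < d0 -> 0 < b -> 0 < from_digits b (d0 :: s).
Proof.
move=> hd hb; elim/last_ind: s => [|s x IH]; first by rewrite /from_digits /=.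
rewrite -rcons_cons fd_rcons; nia.
Qed.

Lemma digits_fd b (hb : 2 <= b) d0 s : 0 < d0 < b -> all (fun d => d < b) s ->
  digits b (from_digits b (d0 :: s)) = d0 :: s.
Proof.
move=> /andP[h0 h1] hs; rewrite /digits; apply: (can_inj (@revK _)); rewrite revK.
elim/last_ind: s hs => [|s x IH].
  move=> _; rewrite /from_digits /= -[d0]/(0 * b + d0) digits_le_step //.
rewrite all_rcons => /andP[hx hs].
rewrite -rcons_cons fd_rcons digits_le_step //; last first.
  have := @fd_pos b d0 s h0 (ltnW hb); nia.
by rewrite IH // rev_rcons.
Qed.

Theorem corollary5 (b : nat) (hb : 2 <= b) (I : seq nat)
  (hI : 0 < size I) (hdig : all (fun d => d < b) I) :
  forall M : nat, exists N : nat, M < N /\ wARH b N /\ infix I (digits b N).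
Proof.
move=> M.
set m := M + 2 * sumn I + 2.
set k := m + (size I).+1.
set X := from_digits b ((1 :: I) ++ nseq k 0).
set t := (1 :: I) ++ (nseq m 0 ++ (rev I ++ [:: 1])).
have hX : X = from_digits b (1 :: I) * b ^ k by rewrite /X fd_cat fd_nseq0 addn0 size_nseq.
have hdX : digits b X = (1 :: I) ++ nseq k 0.
  rewrite /X cat_cons; apply: (@digits_fd b hb) => //.
  rewrite all_cat hdig all_nseq; apply/orP; right; lia.
have hR : revb b X = from_digits b (rev I ++ [:: 1]).
  rewrite /revb hdX rev_cat rev_nseq fd_cat fd_nseq0 mul0n add0n.
  by rewrite rev_cons cats1.
have hN : from_digits b t = X + revb b X.
  rewrite hR hX /t fd_cat fd_cat fd_nseq0 mul0n add0n !size_cat size_nseq size_rev /= addn1.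
  by [].
have hdt : digits b (from_digits b t) = t.
  rewrite /t cat_cons; apply: (@digits_fd b hb) => //.
  rewrite !all_cat hdig all_nseq all_rev hdig /= andbT hb orbC; apply/andP; split; lia.
have hsum : sb b (from_digits b t) = 2 + 2 * sumn I.
  rewrite /sb -[digits_le b _]revK -/(digits b _) hdt sumn_rev /t.
  rewrite sumn_cat /= sumn_cat sumn_nseq sumn_cat sumn_rev /=; lia.
have hpos : 0 < from_digits b (1 :: I) by apply: fd_pos => //; lia.
have hk : k < b ^ k by apply: ltn_expl.
have hXk : b ^ k <= X by rewrite hX; nia.
exists (from_digits b t); split; [|split].
- rewrite hN; lia.
- split; first by rewrite hN; lia.
  exists (X - sb b (from_digits b t)).
  have -> : X - sb b (from_digits b t) + sb b (from_digits b t) = X by rewrite hsum; lia.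
  exact: hN.
- rewrite hdt /t -cat1s -catA; exact: infix_infix.
Qed.
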